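(* Let $b\ge 1$ be an integer and let $c\in\mathbb{R}$ be a fixed critical value (depending only on $b$, not on $l$). For each integer $l\ge 1$ let $D_1(l),\dots,D_b(l)$ be real random variables on a probability space with probability measure $\mathbb{P}$, where $\mathbb{P}$ is the distribution under which the alternative hypothesis $H_{1j}$ for the fixed candidate feature $f_j$ holds. Assume: (A1) almost surely, $D_i(l+1)\le D_i(l)$ for all $i\in\{1,\dots,b\}$ and all $l\ge 1$; (A2) almost surely, for every $l$, all $D_i(l)$ are nonzero and the absolute values $|D_1(l)|,\dots,|D_b(l)|$ are pairwise distinct. Let $T^+(l)=\sum_{i=1}^b R_i(l)\,\mathbf{1}\{D_i(l)>0\}$, where $R_i(l)$ is the rank of $|D_i(l)|$ among $\{|D_1(l)|,\dots,|D_b(l)|\}$ (rank $1$ for the smallest). Define the power $\beta_j(l)=\mathbb{P}\big(T^+(l)\ge c\big)$. Then for every $l\ge 1$, \[\beta_j(l+1)\le \beta_j(l).\]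
   Context: Setting: a response $Y$ and candidate features $f_1,\dots,f_p$; the data are augmented with $l$ synthetic noise features $\varepsilon_1,\dots,\varepsilon_l$ drawn i.i.d. from a fixed distribution. For bootstrap replicate $i=1,\dots,b$, $I^{(i)}_j(l)$ is the importance score of $f_j$ and $I^{(i)}(\varepsilon_k;l)$ that of the $k$-th noise feature when $l$ noise features are included; $M^{(i)}(l)=\max_{1\le k\le l} I^{(i)}(\varepsilon_k;l)$ and $D_i(l)=I^{(i)}_j(l)-M^{(i)}(l)$. $T^+(l)$ is the one-sided Wilcoxon signed-rank statistic computed from $\{D_i(l)\}_{i=1}^b$, and the test rejects $H_{0j}: Y\perp\!\!\!\perp f_j$ in favor of $H_{1j}: Y\not\perp\!\!\!\perp f_j$ when $T^+(l)\ge c$, with $c=c_\alpha(b)$ the Wilcoxon critical value at level $\alpha$. *)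

(* Defs.v *)
From HB Require Import structures.
From mathcomp Require Import all_boot all_order all_algebra.
From mathcomp Require Import all_classical all_reals all_analysis.
Set Implicit Arguments. Unset Strict Implicit. Unset Printing Implicit Defensive.
Import Order.TTheory GRing.Theory Num.Theory.
Local Open Scope ring_scope.

(* Rank of |x i| among |x 0|, ..., |x (b-1)| (rank 1 = smallest; with
   pairwise distinct absolute values this is the usual rank). *)
Definition abs_rank (R : realType) (b : nat) (x : 'I_b -> R) (i : 'I_b) : nat :=
  #|[set k : 'I_b | `|x k| <= `|x i|]|.

Definition wilcoxon_Tplus (R : realType) (b : nat) (x : 'I_b -> R) : R :=
  \sum_(i < b) (abs_rank x i)%:R * (if 0 < x i then 1 else 0).

(* Main.v *)
Require Import Defs.
From HB Require Import structures.
From mathcomp Require Import all_boot all_order all_algebra.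
From mathcomp Require Import all_classical all_reals all_analysis.
Import Order.TTheory GRing.Theory Num.Theory.
Local Open Scope ring_scope.
Local Open Scope classical_set_scope.
From mathcomp Require Import lra measurable_realfun.
Set Implicit Arguments. Unset Strict Implicit. Unset Printing Implicit Defensive.
Local Open Scope ring_scope.
Definition ind (R : realType) (b : bool) : R := if b then 1 else 0.

Lemma Tplus_sum (R : realType) (b : nat) (x : 'I_b -> R) :
  wilcoxon_Tplus x = \sum_(i < b) \sum_(k < b)
     ind R (`|x k| <= `|x i|) * ind R (0 < x i).
Proof.
rewrite /wilcoxon_Tplus; apply: eq_bigr => i _.
rewrite -big_distrl /=; congr (_ * _).
rewrite /abs_rank -sum1_card natr_sum /= big_mkcond /=.
apply: eq_bigr => k _; rewrite inE /ind; by case: ifP.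
Qed.

Definition gW (R : realType) (b : nat) (x : 'I_b -> R) : R :=
  \sum_(i < b) \sum_(k < b) (ind R (0 < x i + x k) + ind R ((i == k) && (0 < x i))).

Lemma gW_mono (R : realType) (b : nat) (x y : 'I_b -> R) :
  (forall i, y i <= x i) -> gW y <= gW x.
Proof.
move=> yx; apply: ler_sum => i _; apply: ler_sum => k _.
apply: lerD; rewrite /ind.
- have := yx i; have := yx k.
  case: (ltrP 0 (y i + y k)) => h1; case: (ltrP 0 (x i + x k)) => h2; lra.
- case: (i == k) => //=; have := yx i.
  case: (ltrP 0 (y i)) => h1; case: (ltrP 0 (x i)) => h2; lra.
Qed.

Lemma pair_eq (R : realType) (a c : R) (e : bool) :
  a != 0 -> c != 0 -> (~~ e -> `|a| != `|c|) -> (e -> a = c) ->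
  ind R (`|c| <= `|a|) * ind R (0 < a) + ind R (`|a| <= `|c|) * ind R (0 < c)
  = ind R (0 < a + c) + ind R (e && (0 < a)).
Proof.
move=> a0 c0 hne heq; case: e heq hne => [/(_ isT) -> _|_ /(_ isT) hne].
  rewrite /= lexx /ind.
  case: (ltrP 0 c) => h; case: (ltrP 0 (c + c)) => h2; lra.
rewrite /ind /=.
have [hac|hac|hac] := ltrgtP `|c| `|a|; last by rewrite hac eqxx in hne.
- rewrite ?(ltW hac) ?(lt_geF hac).
  have [ha|ha|ha] := ltrgtP 0 a; last by rewrite -ha eqxx in a0.
  + rewrite (gtr0_norm ha) in hac.
    have [hc|hc] := ltrP 0 c; rewrite ?(gtr0_norm hc) ?(ler0_norm hc) in hac;
    case: (ltrP 0 (a + c)) => h2; lra.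
  + rewrite (ltr0_norm ha) in hac.
    have [hc|hc] := ltrP 0 c; rewrite ?(gtr0_norm hc) ?(ler0_norm hc) in hac;
    case: (ltrP 0 (a + c)) => h2; lra.
- rewrite ?(ltW hac) ?(lt_geF hac).
  have [hc|hc|hc] := ltrgtP 0 c; last by rewrite -hc eqxx in c0.
  + rewrite (gtr0_norm hc) in hac.
    have [ha|ha] := ltrP 0 a; rewrite ?(gtr0_norm ha) ?(ler0_norm ha) in hac;
    case: (ltrP 0 (a + c)) => h2; lra.
  + rewrite (ltr0_norm hc) in hac.
    have [ha|ha] := ltrP 0 a; rewrite ?(gtr0_norm ha) ?(ler0_norm ha) in hac;
    case: (ltrP 0 (a + c)) => h2; lra.
Qed.

Lemma Tplus_gW (R : realType) (b : nat) (x : 'I_b -> R) :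
  (forall i, x i != 0) -> (forall i k, i != k -> `|x i| != `|x k|) ->
  2 * wilcoxon_Tplus x = gW x.
Proof.
move=> h0 hd; rewrite mulr2n mulrDl mul1r {2}Tplus_sum Tplus_sum.
rewrite [X in _ + X]exchange_big /= -big_split /=; apply: eq_bigr => i _.
rewrite -big_split /=; apply: eq_bigr => k _.
apply: pair_eq => //; first exact: hd.
by move/eqP ->.
Qed.

Lemma Tplus_mono (R : realType) (b : nat) (x y : 'I_b -> R) :
  (forall i, x i != 0) -> (forall i k, i != k -> `|x i| != `|x k|) ->
  (forall i, y i != 0) -> (forall i k, i != k -> `|y i| != `|y k|) ->
  (forall i, y i <= x i) -> wilcoxon_Tplus y <= wilcoxon_Tplus x.
Proof.
move=> x0 xd y0 yd yx.
have := gW_mono yx; rewrite -Tplus_gW // -Tplus_gW //; lra.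
Qed.
Local Open Scope classical_set_scope.
Theorem proposition5p2 (R : realType) (d : measure_display) (Omega : measurableType d)
  (P : probability Omega R) (b : nat) (c : R)
  (D : nat -> 'I_b -> Omega -> R) :
  (0 < b)%N ->
  (forall l i, (1 <= l)%N -> measurable_fun setT (D l i)) ->
  {ae P, forall w, forall l (i : 'I_b), (1 <= l)%N -> D l.+1 i w <= D l i w} ->
  {ae P, forall w, forall l, (1 <= l)%N ->
      (forall i, D l i w != 0) /\
      (forall i k : 'I_b, i != k -> `|D l i w| != `|D l k w|)} ->
  forall l, (1 <= l)%N ->
    (P [set w | (c <= wilcoxon_Tplus (fun i => D l.+1 i w))%R] <=
     P [set w | (c <= wilcoxon_Tplus (fun i => D l i w))%R])%E.
Proof.
move=> b0 mD hmono hdist l l1.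
pose T m w := wilcoxon_Tplus (fun i => D m i w).
have mT : forall m, (1 <= m)%N -> measurable_fun setT (T m).
  move=> m m1.
  have -> : T m = (fun w => \sum_(i < b) \sum_(k < b)
     ind R (`|D m k w| <= `|D m i w|) * ind R (0 < D m i w)).
    by apply/funext => w; rewrite /T Tplus_sum.
  apply: measurable_sum => i; apply: measurable_sum => k.
  apply: measurable_funM; rewrite /ind; apply: measurable_fun_ifT.
  - apply: measurable_fun_ler; apply: measurableT_comp; 
      [exact: normr_measurable| exact: mD | exact: normr_measurable | exact: mD].
  - exact: measurable_cst.
  - exact: measurable_cst.
  - by apply: measurable_fun_ltr; [exact: measurable_cst| exact: mD].
  - exact: measurable_cst.
  - exact: measurable_cst.
have mA : forall m, (1 <= m)%N -> measurable [set w | (c <= T m w)%R].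
  move=> m m1; rewrite -preimage_itvcy.
  by have := mT m m1 measurableT _ (measurable_itv `[c, +oo[%R); rewrite setTI.
have hae : {ae P, forall w, (T l.+1 w <= T l w)%R}.
  apply: filterS2 hmono hdist => w h1 h2.
  have [x0 xd] := h2 l l1; have [y0 yd] := h2 l.+1 isT.
  by apply: Tplus_mono => // i; apply: h1.
have [N [mN PN sub]] := hae.
have sAB : [set w | (c <= T l.+1 w)%R] `<=` [set w | (c <= T l w)%R] `|` N.
  move=> w /= hw; case: (pselect (T l.+1 w <= T l w)%R) => h.
    by left; apply: le_trans h.
  by right; apply: sub.
apply: le_trans (le_measure _ _ _ sAB) _.
- by rewrite inE; apply: mA.
- by rewrite inE; apply: measurableU => //; apply: mA.
apply: le_trans (measureU2 _ _ _) _ => //; first exact: mA.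
have PN0 : P N = 0%E by exact: PN.
apply: le_trans (leeD (lexx (P [set w | (c <= T l w)%R])) (_ : P N <= 0)%E) _.
  by rewrite PN0.
by rewrite adde0.
Qed.
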